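(* For $n\ge3$ let $\mathcal{K}_n(\lambda)=\det(\lambda I_n-M_n)$, where $M_n$ is the $n\times n$ matrix with $(M_n)_{j,i}=1$ if $i\ge j-1$ or $(j,i)=(n,n-2)$, and $(M_n)_{j,i}=0$ otherwise. Then $\mathcal{K}_3(\lambda)=\lambda^3-3\lambda^2$, $\mathcal{K}_4(\lambda)=\lambda^4-4\lambda^3+2\lambda^2$, and $$\mathcal{K}_n(\lambda)=\lambda\,\mathcal{K}_{n-1}(\lambda)-\lambda\,\mathcal{K}_{n-2}(\lambda)\qquad(n\ge5).$$ *)

(* Defs.v *)
From mathcomp Require Import all_boot all_order all_algebra.
Set Implicit Arguments. Unset Strict Implicit. Unset Printing Implicit Defensive.
Import GRing.Theory.
Local Open Scope ring_scope.

(* M_n with 0-based indices: paper entry (j,i) (1-based) is entry (j-1,i-1).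
   (M_n)_{j,i} = 1 iff i >= j-1 (i.e. i0 + 1 >= j0) or (j,i) = (n,n-2)
   (i.e. j0 = n-1, i0 = n-3). *)
Definition Mmat (R : nzRingType) (n : nat) : 'M[R]_n :=
  \matrix_(j < n, i < n)
    (if ((j <= i.+1)%N || ((j == n.-1 :> nat) && (i == (n - 3)%N :> nat)))
     then 1 else 0).

Definition Kpoly (R : comNzRingType) (n : nat) : {poly R} :=
  char_poly (Mmat R n).

(* Main.v *)
Require Import Defs.
From mathcomp Require Import all_boot all_order all_algebra.
From mathcomp Require Import zify ring.
Import GRing.Theory.
Local Open Scope ring_scope.

Lemma minor0 (R : comNzRingType) (k : nat) :
  row' 0 (col' 0 (char_poly_mx (Mmat R k.+2))) = char_poly_mx (Mmat R k.+1).
Proof.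
apply/matrixP => i j; rewrite !mxE /= (inj_eq (@lift_inj _ 0)).
congr (_ - _%:P).
case: i j => i Hi [j Hj] /=.
rewrite /bump /=.
have -> : ((1 + i <= (1 + j).+1)%N || (1 + i == k.+1) && (1 + j == (k.+2 - 3)%N))
  = ((i <= j.+1)%N || (i == k) && (j == (k.+1 - 3)%N)).
  apply/idP/idP; lia.
by [].
Qed.
Lemma K2 (R : comNzRingType) : Kpoly R 2 = 'X^2 - 2%:R *: 'X.
Proof.
rewrite /Kpoly /char_poly (expand_det_row _ ord0) !big_ord_recl big_ord0 /cofactor.
rewrite !det_mx11 !mxE /=.
rewrite /bump /= !mulr1n !mulr0n polyC1 -!mul_polyC !polyC_natr; ring.
Qed.

Lemma K3 (R : comNzRingType) : Kpoly R 3 = 'X^3 - 3%:R *: 'X^2.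
Proof.
rewrite /Kpoly /char_poly (expand_det_row _ ord0) !big_ord_recl big_ord0 /cofactor.
rewrite !(expand_det_row _ ord0) !big_ord_recl !big_ord0 /cofactor.
rewrite !det_mx11 !mxE /=.
rewrite /bump /= !mulr1n !mulr0n polyC1 -!mul_polyC !polyC_natr; ring.
Qed.
Lemma recK (R : comNzRingType) (k : nat) : (2 <= k)%N ->
  Kpoly R k.+2 = 'X * Kpoly R k.+1 - 'X * Kpoly R k.
Proof.
move=> hk.
set A := char_poly_mx (Mmat R k.+2).
have EB : row' 0 (col' 0 A) = char_poly_mx (Mmat R k.+1) by rewrite minor0.
have EBB : row' 0 (col' 0 (char_poly_mx (Mmat R k.+1))) = char_poly_mx (Mmat R k).
  by case: k hk {A EB} => // k _; rewrite minor0.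
set B := row' 0 (col' 0 A).
set C := row' (lift 0 0) (col' 0 A).
set D := \matrix_(i, j) (if i == 0 then 'X *+ (j == 0) else B i j).
have hBCD : \det B = 1 * \det C + 1 * \det D.
  apply: (determinant_multilinear (i0 := 0)).
  - apply/rowP => j; rewrite !mxE /= -!val_eqE /= /bump /=.
    case: j => j Hj /=.
    by rewrite !add1n eqSS mulr0n !mul1r sub0r addrC eq_sym.
  - apply/(@matrixP _ k k.+1) => i j; rewrite !mxE.
    have -> // : lift (lift 0 0) (lift 0 i) = lift 0 (lift 0 i) :> 'I_k.+2 by apply: val_inj.
  - apply/(@matrixP _ k k.+1) => i j; rewrite !mxE.
    have -> // : (lift 0 i == 0) = false by apply/negbTE; rewrite eq_sym neq_lift.
have hD : \det D = 'X * Kpoly R k.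
  rewrite (expand_det_row _ 0) big_ord_recl big1 ?addr0.
    rewrite mxE eqxx /cofactor.
    have ED : row' 0 (col' 0 D) = row' 0 (col' 0 B).
      apply/(@matrixP _ k k) => i j; rewrite !mxE.
      by have -> : (lift 0 i == 0) = false by apply/negbTE; rewrite eq_sym neq_lift.
    by rewrite ED /B EB EBB mulr1n expr0 mul1r.
  move=> j _; rewrite mxE eqxx.
  have -> : (lift 0 j == 0) = false by apply/negbTE; rewrite eq_sym neq_lift.
  by rewrite mulr0n mul0r.
rewrite /Kpoly /char_poly -/A (expand_det_col _ 0) !big_ord_recl big1 ?addr0.
  have hC : \det C = \det B - \det D by rewrite hBCD !mul1r addrK.
  rewrite /cofactor -/B -/C hC hD /B EB /Kpoly /char_poly !mxE /=.
  rewrite mulr1n mulr0n polyC1 /bump /= ?addn0 expr0 expr1 !mul1r; ring.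
move=> i _; rewrite !mxE -val_eqE /= /bump /=.
have -> : (0%N == (k.+2-3)%N) = false by apply/negbTE; lia.
by rewrite andbF mulr0n polyC0 subr0 mul0r.
Qed.

Theorem lemma2 (R : comNzRingType) :
  [/\ Kpoly R 3 = 'X^3 - 3%:R *: 'X^2,
      Kpoly R 4 = 'X^4 - 4%:R *: 'X^3 + 2%:R *: 'X^2
    & forall n : nat, (5 <= n)%N ->
        Kpoly R n = 'X * Kpoly R n.-1 - 'X * Kpoly R n.-2].
Proof.
split; first exact: K3.
- rewrite recK // K3 K2 -!mul_polyC !polyC_natr; ring.
- case=> [|[|k]] // hk; have hk2 : (2 <= k)%N by lia.
  by rewrite recK.
Qed.
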